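(* Under the standing assumptions, for every demand vector $\vec v$ with at least four non-zero entries, there is at most one task of type 1 with respect to $\vec v$.
   Context: Standing assumptions: $n\ge 4$, $k\ge 5$, and $f_1,\dots,f_n$ are functions from demand vectors to $[k]$ satisfying the demand (for every demand vector $\vec v$ and task $j$, exactly $v_j$ agents $a$ have $f_a(\vec v)=j$), with maximum switching cost at most $2$. A demand vector is $\vec v=(v_1,\dots,v_k)$ of non-negative integers with $\sum v_j=n$; task $j$ is non-empty in $\vec v$ if $v_j\ge1$. The switching cost of $(\vec v,\vec v')$ is the number of agents $a$ with $f_a(\vec v)\ne f_a(\vec v')$; $\vec v,\vec v'$ are adjacent if $\|\vec v-\vec v'\|_1=2$. An ordered pair $(\vec v_1,\vec v_2)$ is $(s,t)$-adjacent if $s\ne t$ and $\vec v_2$ is obtained from $\vec v_1$ by moving one unit of demand from task $s$ to task $t$. Agent $a$ is $(i,j)$-mobile with respect to $(\vec v_1,\vec v_2)$ if $f_a(\vec v_1)=i$, $f_a(\vec v_2)=j$, $i\ne j$. If $(\vec v_1,\vec v_2)$ is $(s,t)$-adjacent with switching cost $2$, then there is a task $i\notin\{s,t\}$ such that one switching agent is $(s,i)$-mobile and the other is $(i,t)$-mobile; $i$ is called the intermediate task of $(\vec v_1,\vec v_2)$. A task $t$ is of type 1 with respect to $\vec v$ if for every task $s\ne t$ non-empty in $\vec v$, the $(s,t)$-adjacent pair starting at $\vec v$ has switching cost $1$. A task $t$ is of type 2 with respect to $\vec v$ if there exist a task $i$ and an agent $a$ such that for every task $s\notin\{i,t\}$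 non-empty in $\vec v$, the $(s,t)$-adjacent pair starting at $\vec v$ has switching cost $2$, intermediate task $i$, and $(i,t)$-mobile agent $a$; then $i$ is the intermediate task of $t$ with respect to $\vec v$. *)

(* Defs.v *)
From mathcomp Require Import all_boot.
Set Implicit Arguments. Unset Strict Implicit. Unset Printing Implicit Defensive.

(* Tasks are 'I_k (task j <-> ordinal j), agents are 'I_n.
   A vector is a finite function 'I_k -> nat; a demand vector is one summing to n. *)
Definition vec (k : nat) := {ffun 'I_k -> nat}.

Definition is_demand (n k : nat) (v : vec k) : bool := \sum_(j < k) v j == n.

(* An assignment: f a v is the task of agent a for vector v. Only its values on
   demand vectors matter. *)
Definition assignment (n k : nat) := 'I_n -> vec k -> 'I_k.

Definition satisfies_demand (n k : nat) (f : assignment n k) : Prop :=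
  forall v : vec k, is_demand n v ->
    forall j : 'I_k, #|[set a : 'I_n | f a v == j]| = v j.

Definition switching_cost (n k : nat) (f : assignment n k) (v v' : vec k) : nat :=
  #|[set a : 'I_n | f a v != f a v']|.

Definition l1dist (k : nat) (v v' : vec k) : nat :=
  \sum_(j < k) ((v j - v' j) + (v' j - v j)).

Definition adjacent (k : nat) (v v' : vec k) : bool := l1dist v v' == 2.

Definition max_switching_cost_le2 (n k : nat) (f : assignment n k) : Prop :=
  forall v v' : vec k, is_demand n v -> is_demand n v' -> adjacent v v' ->
    switching_cost f v v' <= 2.

Definition move (k : nat) (v : vec k) (s t : 'I_k) : vec k :=
  [ffun j => v j - (j == s) + (j == t)].

Definition type1 (n k : nat) (f : assignment n k) (v : vec k) (t : 'I_k) : Prop :=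
  forall s : 'I_k, s != t -> 0 < v s -> switching_cost f v (move v s t) = 1.

(* Main.v *)
Require Import Defs.
From mathcomp Require Import all_boot.
From mathcomp Require Import zify.
Set Implicit Arguments. Unset Strict Implicit. Unset Printing Implicit Defensive.

Lemma count_id n k (g h : 'I_n -> 'I_k) (j : 'I_k) :
  #|[set a | g a == j] :\: [set a | h a == j]| + #|[set a | h a == j]| =
  #|[set a | h a == j] :\: [set a | g a == j]| + #|[set a | g a == j]|.
Proof.
have E1 := cardsID [set a | g a == j] [set a | h a == j].
have E2 := cardsID [set a | h a == j] [set a | g a == j].
rewrite setIC in E2. lia.
Qed.

Lemma gain1 n k (g h : 'I_n -> 'I_k) (j : 'I_k) :
  #|[set a | g a == j]| = #|[set a | h a == j]| + 1 ->
  exists a, g a = j /\ h a != j.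
Proof.
move=> E; have := count_id g h j; rewrite E => E2.
have : 0 < #|[set a | g a == j] :\: [set a | h a == j]| by lia.
case/card_gt0P => a; rewrite !inE => /andP [H1 /eqP H2]; by exists a.
Qed.

Lemma gain2 n k (g h : 'I_n -> 'I_k) (j : 'I_k) x y :
  #|[set a | g a == j]| <= #|[set a | h a == j]| + 1 ->
  x != y -> g x = j -> h x != j -> g y = j -> h y != j ->
  exists a, h a = j /\ g a != j.
Proof.
move=> E xy gx hx gy hy; have := count_id g h j => E2.
have : 2 <= #|[set a | g a == j] :\: [set a | h a == j]|.
  rewrite (cardsD1 x) (cardsD1 y) !inE gx hx gy hy eqxx /= eq_sym xy /=.
  lia.
move=> H.
have : 0 < #|[set a | h a == j] :\: [set a | g a == j]| by lia.
case/card_gt0P => a; rewrite !inE => /andP [H1 /eqP H2]; by exists a.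
Qed.

Lemma three_le n (D : {set 'I_n}) x y z :
  x \in D -> y \in D -> z \in D -> x != y -> x != z -> y != z -> 2 < #|D|.
Proof.
move=> hx hy hz xy xz yz.
rewrite (cardsD1 x) (cardsD1 y (D :\ x)) (cardsD1 z ((D :\ x) :\ y)) !inE.
rewrite hx hy hz (eq_sym y x) (eq_sym z y) (eq_sym z x) xy xz yz /=. lia.
Qed.

Lemma no3 n (D : {set 'I_n}) x y z :
  #|D| <= 2 -> x \in D -> y \in D -> z \in D -> x != y -> x != z -> y != z -> False.
Proof.
move=> hD hx hy hz xy xz yz; have := three_le hx hy hz xy xz yz.
by rewrite ltnNge hD.
Qed.

Definition type2 n k (gv gy : 'I_n -> 'I_k) al al' ta r :=
  (forall a, a != al -> a != al' -> gy a = gv a) /\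
  ((gy al = ta /\ gy al' = r) \/ (gy al = r /\ gy al' = ta)).
Definition type3 n k (gv gy : 'I_n -> 'I_k) al al' ta r :=
  exists c, [/\ gv c = ta, gy c = r, gy al = ta, gy al' = ta &
   forall a, a != al -> a != al' -> a != c -> gy a = gv a].

Lemma classify n k (gv gy gA gA' : 'I_n -> 'I_k) (al al' : 'I_n) (sg sg' ta r : 'I_k) :
  sg != ta -> sg' != ta -> sg != r -> sg' != r -> ta != r -> sg != sg' ->
  gv al = sg -> gv al' = sg' ->
  gA al = ta -> (forall a, a != al -> gA a = gv a) ->
  gA' al' = ta -> (forall a, a != al' -> gA' a = gv a) ->
  #|[set a | gy a == ta]| = #|[set a | gv a == ta]| + 1 ->
  #|[set a | gy a == r]| = #|[set a | gv a == r]| + 1 ->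
  #|[set a | gy a != gA a]| <= 2 -> #|[set a | gy a != gA' a]| <= 2 ->
  type2 gv gy al al' ta r \/ type3 gv gy al al' ta r.
Proof.
move=> s1t s2t s1r s2r tr s12 gval gval' gAal gAo gA'al gA'o cta cr cA cA'.
have alal' : al != al' by apply/eqP => E; move: s12; rewrite -gval -gval' E eqxx.
have [d [gyd gvd]] := gain1 cta.
have [e [gye gve]] := gain1 cr.
have de : d != e by apply/eqP => E; move: tr; rewrite -gyd -gye E eqxx.
have hal : gy al != sg.
  apply/negP => /eqP E.
  have ald : al != d by apply/eqP => E'; move: s1t; rewrite -E -gyd E' eqxx.
  have ale : al != e by apply/eqP => E'; move: s1r; rewrite -E -gye E' eqxx.
  apply: (no3 cA (x:=al) (y:=d) (z:=e)) => //; rewrite ?inE.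
  - by rewrite E gAal.
  - by rewrite (gAo d) ?gyd 1?eq_sym.
  - by rewrite (gAo e) ?gye 1?eq_sym.
have hal' : gy al' != sg'.
  apply/negP => /eqP E.
  have ald : al' != d by apply/eqP => E'; move: s2t; rewrite -E -gyd E' eqxx.
  have ale : al' != e by apply/eqP => E'; move: s2r; rewrite -E -gye E' eqxx.
  apply: (no3 cA' (x:=al') (y:=d) (z:=e)) => //; rewrite ?inE.
  - by rewrite E gA'al.
  - by rewrite (gA'o d) ?gyd 1?eq_sym.
  - by rewrite (gA'o e) ?gye 1?eq_sym.
case: (pickP [pred b | (b != al) && (b != al') && (gy b != gv b)]) => [c /= /andP [/andP [cal cal'] cmv] | none].
-
  have hfix : forall b, b != al -> b != al' -> b != c -> gy b = gv b.
    move=> b bal bal' bc; apply/eqP/negPn/negP => bmv.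
    apply: (no3 cA (x:=al') (y:=c) (z:=b)); rewrite ?inE.
    - by rewrite gAo ?gval' // eq_sym.
    - by rewrite gAo.
    - by rewrite gAo.
    - by rewrite eq_sym.
    - by rewrite eq_sym.
    - by rewrite eq_sym.
  have gyal : gy al = ta.
    apply/eqP/negPn/negP => H.
    apply: (no3 cA (x:=al) (y:=al') (z:=c)); rewrite ?inE.
    - by rewrite gAal.
    - by rewrite gAo ?gval' // eq_sym.
    - by rewrite gAo.
    - by [].
    - by rewrite eq_sym.
    - by rewrite eq_sym.
  have gyal' : gy al' = ta.
    apply/eqP/negPn/negP => H.
    apply: (no3 cA' (x:=al') (y:=al) (z:=c)); rewrite ?inE.
    - by rewrite gA'al.
    - by rewrite gA'o ?gval.
    - by rewrite gA'o.
    - by rewrite eq_sym.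
    - by rewrite eq_sym.
    - by rewrite eq_sym.
  have g1 : gv al != ta by rewrite gval.
  have g2 : gv al' != ta by rewrite gval'.
  have cta' : #|[set a | gy a == ta]| <= #|[set a | gv a == ta]| + 1 by rewrite cta.
  have [c0 [gvc0 gyc0]] := gain2 cta' alal' gyal g1 gyal' g2.
  have c0c : c0 = c.
    apply/eqP/negPn/negP => H.
    have c0al : c0 != al by apply/eqP => E; move: s1t; rewrite -gval -E gvc0 eqxx.
    have c0al' : c0 != al' by apply/eqP => E; move: s2t; rewrite -gval' -E gvc0 eqxx.
    by move: gyc0; rewrite hfix // gvc0 eqxx.
  have ec : e = c.
    apply/eqP/negPn/negP => H.
    have eal : e != al by apply/eqP => E; move: tr; rewrite -gyal -gye E eqxx.
    have eal' : e != al' by apply/eqP => E; move: tr; rewrite -gyal' -gye E eqxx.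
    by move: gve; rewrite -hfix // gye eqxx.
  right; exists c; split => //; [by rewrite -c0c | by rewrite -ec].
- have hfix : forall b, b != al -> b != al' -> gy b = gv b.
    move=> b bal bal'; move: (none b) => /=; rewrite bal bal' /=.
    by move/negbFE/eqP.
  left; split => //.
  have dIn : d = al \/ d = al'.
    case: (eqVneq d al) => [->|dal]; first by left.
    case: (eqVneq d al') => [->|dal']; first by right.
    by move: gvd; rewrite -hfix // gyd eqxx.
  have eIn : e = al \/ e = al'.
    case: (eqVneq e al) => [->|eal]; first by left.
    case: (eqVneq e al') => [->|eal']; first by right.
    by move: gve; rewrite -hfix // gye eqxx.
  case: dIn => ?; case: eIn => ?; subst.
  + by rewrite eqxx in de.
  + by left.
  + by right.
  + by rewrite eqxx in de.
Qed.

Lemma single n k (gv gP : 'I_n -> 'I_k) s t :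
  #|[set a | gv a != gP a]| = 1 ->
  #|[set a | gP a == t]| = #|[set a | gv a == t]| + 1 ->
  #|[set a | gv a == s]| = #|[set a | gP a == s]| + 1 ->
  exists al, [/\ gv al = s, gP al = t & forall a, a != al -> gP a = gv a].
Proof.
move=> /eqP/cards1P [al hD] ct cs.
have oth : forall a, a != al -> gP a = gv a.
  move=> a aal; apply/eqP; rewrite eq_sym; apply/negPn/negP => H.
  have : a \in [set a | gv a != gP a] by rewrite inE.
  by rewrite hD inE (negbTE aal).
have [b [gPb gvb]] := gain1 ct.
have [c [gvc gPc]] := gain1 cs.
have bal : b = al.
  by apply/eqP; apply/negPn/negP => H; move: gvb; rewrite -oth // gPb eqxx.
have cal : c = al.
  by apply/eqP; apply/negPn/negP => H; move: gPc; rewrite oth // gvc eqxx.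
by exists al; split => //; [rewrite -cal | rewrite -bal].
Qed.

Lemma neq_gv n k (gv : 'I_n -> 'I_k) x y p q : gv x = p -> gv y = q -> p != q -> x != y.
Proof. by move=> hx hy pq; apply/eqP => E; move: pq; rewrite -hx -hy E eqxx. Qed.

Lemma cls_range n k (gv g : 'I_n -> 'I_k) al al' ta r :
  type2 gv g al al' ta r \/ type3 gv g al al' ta r ->
  forall a, g a = gv a \/ g a = ta \/ g a = r.
Proof.
move=> [[hf ho]|[c [gvc gc g1 g2 hf]]] a.
- case: (eqVneq a al) => [->|h1]; first by case: ho => [[-> _]|[-> _]]; auto.
  case: (eqVneq a al') => [->|h2]; first by case: ho => [[_ ->]|[_ ->]]; auto.
  by left; apply: hf.
- case: (eqVneq a al) => [->|h1]; first by auto.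
  case: (eqVneq a al') => [->|h2]; first by auto.
  case: (eqVneq a c) => [->|h3]; first by auto.
  by left; apply: hf.
Qed.

Lemma cls_fixed n k (gv g : 'I_n -> 'I_k) al al' sg sg' ta r :
  gv al = sg -> gv al' = sg' ->
  type2 gv g al al' ta r \/ type3 gv g al al' ta r ->
  forall a, gv a != sg -> gv a != sg' -> gv a != ta -> g a = gv a.
Proof.
move=> h1 h2 [[hf ho]|[c [gvc gc g1 g2 hf]]] a n1 n2 n3.
- by apply: hf; [apply: (neq_gv (erefl _) h1) | apply: (neq_gv (erefl _) h2)].
- apply: hf; [apply: (neq_gv (erefl _) h1) | apply: (neq_gv (erefl _) h2) |
    apply: (neq_gv (erefl _) gvc)] => //.
Qed.

Lemma type2_or n k (gv g : 'I_n -> 'I_k) al al' ta r :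
  type2 gv g al al' ta r -> (g al = ta \/ g al = r) /\ (g al' = ta \/ g al' = r).
Proof. by case=> _ [[-> ->]|[-> ->]]; auto. Qed.

Lemma triangle n k (gv g12 g13 g23 : 'I_n -> 'I_k) a1 a2 a3 s1 s2 s3 t r :
  s1 != s2 -> s1 != s3 -> s2 != s3 -> s1 != t -> s2 != t -> s3 != t ->
  s1 != r -> s2 != r -> s3 != r -> t != r ->
  gv a1 = s1 -> gv a2 = s2 -> gv a3 = s3 ->
  type2 gv g12 a1 a2 t r \/ type3 gv g12 a1 a2 t r ->
  type2 gv g13 a1 a3 t r \/ type3 gv g13 a1 a3 t r ->
  type2 gv g23 a2 a3 t r ->
  #|[set a | g12 a != g13 a]| <= 2 -> #|[set a | g12 a != g23 a]| <= 2 ->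
  #|[set a | g13 a != g23 a]| <= 2 -> False.
Proof.
move=> s12 s13 s23 s1t s2t s3t s1r s2r s3r tr h1 h2 h3 c12 c13 t23 dx dy dz.
have a12 := neq_gv h1 h2 s12. have a13 := neq_gv h1 h3 s13. have a23 := neq_gv h2 h3 s23.
have [f23 o23] := t23.
have [o23a o23b] := type2_or t23.
have g23a1 : g23 a1 = s1 by rewrite f23.
have ts1 : t != s1 by rewrite eq_sym.
have ts2 : t != s2 by rewrite eq_sym.
have ts3 : t != s3 by rewrite eq_sym.
have rs1 : r != s1 by rewrite eq_sym.
have rs2 : r != s2 by rewrite eq_sym.
have rs3 : r != s3 by rewrite eq_sym.
have t12 : type2 gv g12 a1 a2 t r.
  case: c12 => [//|[c [gvc gc e1 e2 hf]]]; exfalso.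
  have ca1 := neq_gv gvc h1 ts1. have ca2 := neq_gv gvc h2 ts2.
  have ca3 := neq_gv gvc h3 ts3.
  have g23c : g23 c = t by rewrite f23.
  have g12a3 : g12 a3 = s3 by rewrite hf // eq_sym.
  apply: (no3 dy (x:=a1) (y:=c) (z:=a3)); rewrite ?inE.
  - by rewrite e1 g23a1.
  - by rewrite gc g23c eq_sym.
  - by rewrite g12a3; case: o23b => ->.
  - by rewrite eq_sym.
  - done.
  - done.
have t13 : type2 gv g13 a1 a3 t r.
  case: c13 => [//|[c [gvc gc e1 e2 hf]]]; exfalso.
  have ca1 := neq_gv gvc h1 ts1. have ca2 := neq_gv gvc h2 ts2.
  have ca3 := neq_gv gvc h3 ts3.
  have g23c : g23 c = t by rewrite f23.
  have g13a2 : g13 a2 = s2 by rewrite hf // eq_sym.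
  apply: (no3 dz (x:=a1) (y:=c) (z:=a2)); rewrite ?inE.
  - by rewrite e1 g23a1.
  - by rewrite gc g23c eq_sym.
  - by rewrite g13a2; case: o23a => ->.
  - by rewrite eq_sym.
  - done.
  - done.
have [f12 o12] := t12. have [f13 o13] := t13.
have [o12a o12b] := type2_or t12. have [o13a o13b] := type2_or t13.
have g12a3 : g12 a3 = s3 by rewrite f12 // eq_sym.
have g13a2 : g13 a2 = s2 by rewrite f13 // eq_sym.
have e1 : g12 a1 = g13 a1.
  apply/eqP/negPn/negP => H; apply: (no3 dx (x:=a1) (y:=a2) (z:=a3)); rewrite ?inE //.
  - by rewrite g13a2; case: o12b => ->.
  - by rewrite g12a3; case: o13b => ->.
have e2 : g12 a2 = g23 a2.
  apply/eqP/negPn/negP => H; apply: (no3 dy (x:=a2) (y:=a1) (z:=a3)); rewrite ?inE //.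
  - by rewrite g23a1; case: o12a => ->.
  - by rewrite g12a3; case: o23b => ->.
  - by rewrite eq_sym.
have e3 : g13 a3 = g23 a3.
  apply/eqP/negPn/negP => H; apply: (no3 dz (x:=a3) (y:=a1) (z:=a2)); rewrite ?inE //.
  - by rewrite g23a1; case: o13a => ->.
  - by rewrite g13a2; case: o23a => ->.
  - by rewrite eq_sym.
  - by rewrite eq_sym.
move/eqP: tr => tr.
case: o12 => [[x1 x2]|[x1 x2]]; case: o13 => [[y1 y2]|[y1 y2]];
  case: o23 => [[z1 z2]|[z1 z2]]; congruence.
Qed.

Lemma caseA n k (gv g23 gR : 'I_n -> 'I_k) a2 a3 b s2 s3 t r :
  s2 != s3 -> s2 != t -> s3 != t -> t != r ->
  gv a2 = s2 -> gv a3 = s3 -> gv b = s3 -> gR b = r -> (forall a, a != b -> gR a = gv a) ->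
  type2 gv g23 a2 a3 t r \/ type3 gv g23 a2 a3 t r ->
  #|[set a | g23 a != gR a]| <= 2 -> type2 gv g23 a2 a3 t r.
Proof.
move=> s23 s2t s3t tr h2 h3 hb gRb gRo [//|[c [gvc gc e2 e3 hf]]] d; exfalso.
have ts2 : t != s2 by rewrite eq_sym.
have ts3 : t != s3 by rewrite eq_sym.
have a2b := neq_gv h2 hb s23.
have cb := neq_gv gvc hb ts3.
have ca2 := neq_gv gvc h2 ts2.
have ca3 := neq_gv gvc h3 ts3.
have a23 := neq_gv h2 h3 s23.
apply: (no3 d (x:=a2) (y:=c) (z:=a3)); rewrite ?inE.
- by rewrite e2 gRo // h2.
- by rewrite gc gRo // gvc eq_sym.
- rewrite e3; case: (eqVneq a3 b) => [->|a3b]; first by rewrite gRb.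
  by rewrite gRo // h3.
- by rewrite eq_sym.
- done.
- done.
Qed.

Lemma caseB n k (gv gpq gw : 'I_n -> 'I_k) ap aq bp bq p q u t r :
  p != q -> p != t -> q != t -> u != t -> t != r ->
  gv ap = p -> gv aq = q -> gv bp = p -> gv bq = q ->
  type2 gv gpq ap aq t r \/ type3 gv gpq ap aq t r ->
  type2 gv gw bp bq u r \/ type3 gv gw bp bq u r ->
  #|[set a | gpq a != gw a]| <= 2 -> type2 gv gpq ap aq t r.
Proof.
move=> pq pt qt ut tr hap haq hbp hbq [//|[c [gvc gc ep eq hf]]] cw d; exfalso.
have tp : t != p by rewrite eq_sym.
have tq : t != q by rewrite eq_sym.
have tu : t != u by rewrite eq_sym.
have gwc : gw c = t.
  by rewrite (cls_fixed hbp hbq cw) ?gvc.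
have rgw : forall a, gv a != t -> gw a != t.
  move=> a ha; case: (cls_range cw a) => [->//|[->//|->]]; by rewrite eq_sym.
apply: (no3 d (x:=c) (y:=ap) (z:=aq)); rewrite ?inE.
- by rewrite gc gwc eq_sym.
- by rewrite ep eq_sym rgw // hap.
- by rewrite eq eq_sym rgw // haq.
- exact: (neq_gv gvc hap tp).
- exact: (neq_gv gvc haq tq).
- exact: (neq_gv hap haq pq).
Qed.

Definition vec2 k (v : vec k) (a b c d : 'I_k) : vec k :=
  [ffun j => v j - (j == a) - (j == b) + (j == c) + (j == d)].

Definition step k (y z : vec k) (a b : 'I_k) := forall j, z j + (j == a) = y j + (j == b).

Lemma sum_ind k (a : 'I_k) : \sum_(j < k) (j == a : nat) = 1.
Proof. by rewrite (bigD1 a) //= eqxx big1 // => j /negbTE ->. Qed.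

Lemma step_demand n k (y z : vec k) a b : step y z a b -> is_demand n y -> is_demand n z.
Proof.
move=> H /eqP dy; apply/eqP.
have E : \sum_(j < k) (z j + (j == a)) = \sum_(j < k) (y j + (j == b)).
  by apply: eq_bigr => j _; apply: H.
by move: E; rewrite !big_split /= !sum_ind dy => /eqP; rewrite eqn_add2r => /eqP.
Qed.

Lemma l1distC k (y z : vec k) : l1dist y z = l1dist z y.
Proof. by apply: eq_bigr => j _; rewrite addnC. Qed.

Lemma step_adj k (y z : vec k) a b : a != b -> step y z a b -> adjacent y z.
Proof.
move=> ab H; rewrite /adjacent /l1dist.
have -> : \sum_(j < k) ((y j - z j) + (z j - y j)) = \sum_(j < k) ((j == a) + (j == b) : nat).
  apply: eq_bigr => j _; have := H j.
  case: (eqVneq j a) => [->|ja]; first by rewrite (negbTE ab) /=; lia.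
  rewrite /=; case: (j == b) => /=; lia.
by rewrite big_split /= !sum_ind.
Qed.

Lemma step_cost n k (f : assignment n k) (y z : vec k) a b :
  max_switching_cost_le2 f -> a != b -> step y z a b -> is_demand n y ->
  is_demand n z /\ switching_cost f y z <= 2 /\ switching_cost f z y <= 2.
Proof.
move=> msc ab H dy; have dz := step_demand H dy.
have adj := step_adj ab H.
split => //; split; first exact: msc.
apply: msc => //; by rewrite /adjacent l1distC.
Qed.

Ltac pt := move=> j; rewrite !ffunE;
  repeat (match goal with |- context [?x == ?y] => case: (x =P y) => [?|?]; [try subst|] end);
  rewrite /=; try congruence; lia.

Lemma st_move k (v : vec k) s t : s <> t -> 0 < v s -> step v (move v s t) s t.
Proof. move=> st hs; pt. Qed.

Lemma st_L2 k (v : vec k) a b c d :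
  a <> b -> a <> c -> a <> d -> b <> c -> b <> d -> c <> d -> 0 < v a -> 0 < v b ->
  step (move v a c) (vec2 v a b c d) b d.
Proof. move=> *; pt. Qed.

Lemma st_L3 k (v : vec k) a b c d :
  a <> b -> a <> c -> a <> d -> b <> c -> b <> d -> c <> d -> 0 < v a -> 0 < v b ->
  step (move v b c) (vec2 v a b c d) a d.
Proof. move=> *; pt. Qed.

Lemma st_L4 k (v : vec k) a b e c d :
  a <> b -> a <> c -> a <> d -> b <> c -> b <> d -> c <> d -> a <> e -> b <> e -> e <> c -> e <> d ->
  0 < v a -> 0 < v b -> 0 < v e ->
  step (vec2 v a b c d) (vec2 v a e c d) e b.
Proof. move=> *; pt. Qed.

Lemma st_L5 k (v : vec k) a b c d e :
  a <> b -> a <> c -> a <> d -> b <> c -> b <> d -> c <> d -> a <> e -> b <> e -> e <> c -> e <> d ->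
  0 < v a -> 0 < v b ->
  step (vec2 v a b c d) (vec2 v a b e d) c e.
Proof. move=> *; pt. Qed.

Lemma vec2C1 k (v : vec k) a b c d : vec2 v a b c d = vec2 v b a c d.
Proof. apply/ffunP => j; rewrite !ffunE; congr (_ + _ + _); by rewrite subnAC. Qed.

Lemma vec2C2 k (v : vec k) a b c d : vec2 v a b c d = vec2 v a b d c.
Proof. apply/ffunP => j; rewrite !ffunE; by rewrite addnAC. Qed.

Lemma vec2_c k (v : vec k) a b c d : a <> c -> b <> c -> c <> d -> vec2 v a b c d c = v c + 1.
Proof. move=> *; rewrite ffunE eqxx; do 3 (case: eqP => ?; try congruence); rewrite /=; lia. Qed.

Lemma vec2_d k (v : vec k) a b c d : a <> d -> b <> d -> c <> d -> vec2 v a b c d d = v d + 1.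
Proof. move=> *; rewrite vec2C2 vec2_c //; congruence. Qed.

Lemma move_t k (v : vec k) s t : s <> t -> move v s t t = v t + 1.
Proof. move=> *; rewrite ffunE eqxx; case: eqP => ?; try congruence; rewrite /=; lia. Qed.

Lemma move_s k (v : vec k) s t : s <> t -> 0 < v s -> v s = move v s t s + 1.
Proof. move=> *; rewrite ffunE eqxx; case: eqP => ?; try congruence; rewrite /=; lia. Qed.

Definition gf n k (f : assignment n k) (y : vec k) := fun a => f a y.

Lemma single_vec n k (f : assignment n k) (v : vec k) s t :
  satisfies_demand f -> is_demand n v -> s <> t -> 0 < v s ->
  switching_cost f v (move v s t) = 1 ->
  exists al, [/\ f al v = s, f al (move v s t) = t &
    forall a, a != al -> f a (move v s t) = f a v].
Proof.
move=> sat dv st hs c1.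
have dm := step_demand (st_move st hs) dv.
apply: (single (gv := gf f v) (gP := gf f (move v s t))) => //.
- by rewrite /gf (sat _ dm) (sat _ dv) move_t.
- by rewrite /gf (sat _ dv) (sat _ dm) -move_s.
Qed.

Lemma classify_vec n k (f : assignment n k) (v y A A' : vec k) al al' sg sg' ta r :
  satisfies_demand f -> is_demand n v -> is_demand n y ->
  sg != ta -> sg' != ta -> sg != r -> sg' != r -> ta != r -> sg != sg' ->
  f al v = sg -> f al' v = sg' ->
  f al A = ta -> (forall a, a != al -> f a A = f a v) ->
  f al' A' = ta -> (forall a, a != al' -> f a A' = f a v) ->
  y ta = v ta + 1 -> y r = v r + 1 ->
  switching_cost f y A <= 2 -> switching_cost f y A' <= 2 ->
  type2 (gf f v) (gf f y) al al' ta r \/ type3 (gf f v) (gf f y) al al' ta r.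
Proof.
move=> sat dv dy *.
apply: (classify (gA := gf f A) (gA' := gf f A') (sg := sg) (sg' := sg')) => //.
- by rewrite /gf (sat _ dy) (sat _ dv).
- by rewrite /gf (sat _ dy) (sat _ dv).
Qed.

Lemma core n k (f : assignment n k) (v : vec k) t s1 s2 s3 r :
  satisfies_demand f -> max_switching_cost_le2 f -> is_demand n v -> type1 f v t ->
  s1 <> s2 -> s1 <> s3 -> s2 <> s3 -> s1 <> t -> s2 <> t -> s3 <> t ->
  s1 <> r -> s2 <> r -> s3 <> r -> t <> r ->
  0 < v s1 -> 0 < v s2 -> 0 < v s3 ->
  (forall a2 a3, f a2 v = s2 -> f a3 v = s3 ->
    type2 (gf f v) (gf f (vec2 v s2 s3 t r)) a2 a3 t r \/
    type3 (gf f v) (gf f (vec2 v s2 s3 t r)) a2 a3 t r ->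
    type2 (gf f v) (gf f (vec2 v s2 s3 t r)) a2 a3 t r) -> False.
Proof.
move=> sat msc dv ty s12 s13 s23 s1t s2t s3t s1r s2r s3r tr h1 h2 h3 H.
have b12 : s1 != s2 by apply/eqP. have b13 : s1 != s3 by apply/eqP.
have b23 : s2 != s3 by apply/eqP. have b1t : s1 != t by apply/eqP.
have b2t : s2 != t by apply/eqP. have b3t : s3 != t by apply/eqP.
have b1r : s1 != r by apply/eqP. have b2r : s2 != r by apply/eqP.
have b3r : s3 != r by apply/eqP. have btr : t != r by apply/eqP.
have [a1 [v1 P1 o1]] := single_vec sat dv s1t h1 (ty s1 b1t h1).
have [a2 [v2 P2 o2]] := single_vec sat dv s2t h2 (ty s2 b2t h2).
have [a3 [v3 P3 o3]] := single_vec sat dv s3t h3 (ty s3 b3t h3).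
have dP1 := step_demand (st_move s1t h1) dv.
have dP2 := step_demand (st_move s2t h2) dv.
have dP3 := step_demand (st_move s3t h3) dv.
have s21 : s2 <> s1 by congruence. have s31 : s3 <> s1 by congruence.
have s32 : s3 <> s2 by congruence.
have [d12 [_ c12a]] := step_cost msc b2r (st_L2 s12 s1t s1r s2t s2r tr h1 h2) dP1.
have [d13 [_ c13a]] := step_cost msc b3r (st_L2 s13 s1t s1r s3t s3r tr h1 h3) dP1.
have [_ [_ c12b]] := step_cost msc b1r (st_L3 s12 s1t s1r s2t s2r tr h1 h2) dP2.
have [d23 [_ c23a]] := step_cost msc b3r (st_L2 s23 s2t s2r s3t s3r tr h2 h3) dP2.
have [_ [_ c13b]] := step_cost msc b1r (st_L3 s13 s1t s1r s3t s3r tr h1 h3) dP3.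
have [_ [_ c23b]] := step_cost msc b2r (st_L3 s23 s2t s2r s3t s3r tr h2 h3) dP3.
have cl12 := classify_vec sat dv d12 b1t b2t b1r b2r btr b12 v1 v2 P1 o1 P2 o2
  (vec2_c v s1t s2t tr) (vec2_d v s1r s2r tr) c12a c12b.
have cl13 := classify_vec sat dv d13 b1t b3t b1r b3r btr b13 v1 v3 P1 o1 P3 o3
  (vec2_c v s1t s3t tr) (vec2_d v s1r s3r tr) c13a c13b.
have cl23 := classify_vec sat dv d23 b2t b3t b2r b3r btr b23 v2 v3 P2 o2 P3 o3
  (vec2_c v s2t s3t tr) (vec2_d v s2r s3r tr) c23a c23b.
have t23 := H a2 a3 v2 v3 cl23.
have [_ [_ dx]] := step_cost msc b23
  (st_L4 s13 s1t s1r s3t s3r tr s12 s32 s2t s2r h1 h3 h2) d13.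
have [_ [_ dy]] := step_cost msc b13
  (st_L4 s23 s2t s2r s3t s3r tr s21 s31 s1t s1r h2 h3 h1) d23.
rewrite -vec2C1 in dy.
have d23' : is_demand n (vec2 v s3 s2 t r) by rewrite -vec2C1.
have [_ [_ dz]] := step_cost msc b12
  (st_L4 s32 s3t s3r s2t s2r tr s31 s21 s1t s1r h3 h2 h1) d23'.
rewrite -vec2C1 -[vec2 v s3 s2 t r]vec2C1 in dz.
exact: (triangle b12 b13 b23 b1t b2t b3t b1r b2r b3r btr v1 v2 v3 cl12 cl13 t23 dx dy dz).
Qed.

Lemma cardD1_ge (T : finType) (A : {set T}) x : #|A| <= #|A :\ x| + 1.
Proof. rewrite (cardsD1 x A); case: (x \in A) => /=; lia. Qed.

Lemma card_rm4 (T : finType) (A : {set T}) a b c d :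
  #|A| <= #|A :\ a :\ b :\ c :\ d| + 4.
Proof.
have := cardD1_ge A a; have := cardD1_ge (A :\ a) b.
have := cardD1_ge (A :\ a :\ b) c; have := cardD1_ge (A :\ a :\ b :\ c) d.
lia.
Qed.

Lemma pick3 (T : finType) (A : {set T}) : 3 <= #|A| ->
  exists x y z, [/\ x \in A, y \in A, z \in A & [/\ x != y, x != z & y != z]].
Proof.
move=> h.
have /card_gt0P [x xA] : 0 < #|A| by lia.
have /card_gt0P [y] : 0 < #|A :\ x| by have := cardD1_ge A x; lia.
rewrite !inE => /andP [yx yA].
have /card_gt0P [z] : 0 < #|A :\ x :\ y|.
  by have := cardD1_ge A x; have := cardD1_ge (A :\ x) y; lia.
rewrite !inE => /andP [zy /andP [zx zA]].
by exists x, y, z; split => //; split; rewrite eq_sym.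
Qed.

Lemma pick2 (T : finType) (A : {set T}) : 2 <= #|A| ->
  exists x y, [/\ x \in A, y \in A & x != y].
Proof.
move=> h.
have /card_gt0P [x xA] : 0 < #|A| by lia.
have /card_gt0P [y] : 0 < #|A :\ x| by have := cardD1_ge A x; lia.
rewrite !inE => /andP [yx yA].
by exists x, y; split => //; rewrite eq_sym.
Qed.

Theorem lemma4p5 (n k : nat) (f : assignment n k) :
  4 <= n -> 5 <= k ->
  satisfies_demand f ->
  max_switching_cost_le2 f ->
  forall v : vec k, is_demand n v ->
    4 <= #|[set j : 'I_k | 0 < v j]| ->
    forall t1 t2 : 'I_k, type1 f v t1 -> type1 f v t2 -> t1 = t2.
Proof.
move=> hn hk sat msc v dv hc t1 t2 ty1 ty2.
apply/eqP/negPn/negP => b12; have n12 : t1 <> t2 by apply/eqP.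
set N := [set j : 'I_k | 0 < v j] in hc.
case: (posnP (v t2)) => [z2 | p2].
- have h3 : 3 <= #|N :\ t1| by have := cardD1_ge N t1; lia.
  have [s1 [s2 [s3 [i1 i2 i3 [b12' b13 b23]]]]] := pick3 h3.
  move: i1 i2 i3; rewrite !inE => /andP [b1t ps1] /andP [b2t ps2] /andP [b3t ps3].
  have s12 : s1 <> s2 by apply/eqP. have s13 : s1 <> s3 by apply/eqP.
  have s23 : s2 <> s3 by apply/eqP.
  have s1t : s1 <> t1 by apply/eqP. have s2t : s2 <> t1 by apply/eqP.
  have s3t : s3 <> t1 by apply/eqP.
  have s1r : s1 <> t2 by move=> E; move: ps1; rewrite E z2.
  have s2r : s2 <> t2 by move=> E; move: ps2; rewrite E z2.
  have s3r : s3 <> t2 by move=> E; move: ps3; rewrite E z2.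
  apply: (core sat msc dv ty1 s12 s13 s23 s1t s2t s3t s1r s2r s3r n12 ps1 ps2 ps3).
  move=> a2 a3 va2 va3 cl.
  have b3r : s3 != t2 by apply/eqP.
  have [b [vb Rb Ro]] := single_vec sat dv s3r ps3 (ty2 s3 b3r ps3).
  have dR := step_demand (st_move s3r ps3) dv.
  have s32 : s3 <> s2 by congruence.
  have b2t' : s2 != t1 by apply/eqP.
  have [_ [_ cR]] := step_cost msc b2t'
     (st_L2 s32 s3r s3t s2r s2t (nesym n12) ps3 ps2) dR.
  have E : vec2 v s2 s3 t1 t2 = vec2 v s3 s2 t2 t1 by rewrite vec2C1 vec2C2.
  rewrite -E in cR.
  have btr : t1 != t2 by apply/eqP.
  exact: (caseA (gR := gf f (move v s3 t2)) b23 b2t b3t btr va2 va3 vb Rb Ro cl cR).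
- have h2 : 2 <= #|N :\ t1 :\ t2|.
    by have := cardD1_ge N t1; have := cardD1_ge (N :\ t1) t2; lia.
  have [p [q [ip iq bpq]]] := pick2 h2.
  move: ip iq; rewrite !inE => /and3P [bpt2 bpt1 hp] /and3P [bqt2 bqt1 hq].
  have hr : 0 < #|[set: 'I_k] :\ t1 :\ t2 :\ p :\ q|.
    have H := card_rm4 [set: 'I_k] t1 t2 p q; rewrite cardsT card_ord in H.
    by rewrite -(leq_add2r 4); apply: leq_trans hk H.
  have [r] := card_gt0P hr.
  rewrite !inE => /and4P [brq brp brt2 /andP [brt1 _]].
  have pq : p <> q by apply/eqP. have pt1 : p <> t1 by apply/eqP.
  have qt1 : q <> t1 by apply/eqP. have pt2 : p <> t2 by apply/eqP.
  have qt2 : q <> t2 by apply/eqP. have pr : p <> r by move=> E; move: brp; rewrite E eqxx.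
  have qr : q <> r by move=> E; move: brq; rewrite E eqxx.
  have t1r : t1 <> r by move=> E; move: brt1; rewrite E eqxx.
  have t2r : t2 <> r by move=> E; move: brt2; rewrite E eqxx.
  have t2p : t2 <> p by congruence. have t2q : t2 <> q by congruence.
  apply: (core sat msc dv ty1 t2p t2q pq (nesym n12) pt1 qt1 t2r pr qr t1r p2 hp hq).
  move=> a2 a3 va2 va3 cl.
  have [bp [vbp Qp op]] := single_vec sat dv pt2 hp (ty2 p bpt2 hp).
  have [bq [vbq Qq oq]] := single_vec sat dv qt2 hq (ty2 q bqt2 hq).
  have dQp := step_demand (st_move pt2 hp) dv.
  have dQq := step_demand (st_move qt2 hq) dv.
  have bqr : q != r by apply/eqP. have bpr : p != r by apply/eqP.
  have bt2r : t2 != r by apply/eqP.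
  have [dw [_ cwp]] := step_cost msc bqr (st_L2 pq pt2 pr qt2 qr t2r hp hq) dQp.
  have [_ [_ cwq]] := step_cost msc bpr (st_L3 pq pt2 pr qt2 qr t2r hp hq) dQq.
  have clw := classify_vec sat dv dw bpt2 bqt2 bpr bqr bt2r bpq vbp vbq Qp op Qq oq
    (vec2_c v pt2 qt2 t2r) (vec2_d v pr qr t2r) cwp cwq.
  have b21 : t2 != t1 by rewrite eq_sym.
  have [_ [_ cx]] := step_cost msc b21
    (st_L5 pq pt2 pr qt2 qr t2r pt1 qt1 n12 t1r hp hq) dw.
  have bt1r : t1 != r by apply/eqP.
  exact: (caseB bpq bpt1 bqt1 b21 bt1r va2 va3 vbp vbq cl clw cx).
Qed.
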